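(* Let $(E,\mathcal{E},\mu)$ be a non-atomic $\sigma$-finite measure space with $\mu(E)=\infty$. Let $(a_n)_{n\ge1}$ be positive numbers with $a_n\to\infty$ and $a_n=o(n)$. For each $n$ let $P_n$ be a probability measure on $(E,\mathcal{E})$ such that $\mu_n:=(n/a_n)P_n$ satisfies $\mu_n(B)\le\mu_{n+1}(B)$ and $\mu_n(B)\to\mu(B)$ for every $B\in\mathcal{E}$. Then for any fixed $k\in\mathbb{N}_+$ and any $f\in L^2(\mu^k)$, $$\Big(\frac{n}{a_n}\Big)^{k/2}\int_{E^k} f\,dP_n^k\to0\qquad (n\to\infty).$$
   Context: $\mu^k$ and $P_n^k$ denote $k$-fold product measures on $E^k$. *)

(* Defs.v *)
From HB Require Import structures.
From mathcomp Require Import all_boot all_order all_algebra.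
From mathcomp Require Import all_classical all_reals all_analysis.
Set Implicit Arguments. Unset Strict Implicit. Unset Printing Implicit Defensive.
Import Order.TTheory GRing.Theory Num.Theory.
Import numFieldNormedType.Exports.
Local Open Scope classical_set_scope.
Local Open Scope ring_scope.

(* ptype E k : the space E^(k+1) = (...((E * E) * E) ... ) * E
   (k+1 factors), with its product sigma-algebra *)
Fixpoint ptype d (E : measurableType d) (k : nat) : {d' & measurableType d'} :=
  match k with
  | 0 => existT _ d E
  | S k => existT _ _ (Measurable.clone _ (projT2 (ptype E k) * E)%type _)
  end.

Fixpoint pmeas d (E : measurableType d) (R : realType)
  (m : {sigma_finite_measure set E -> \bar R}) (k : nat) :
  {measure set (projT2 (ptype E k)) -> \bar R} :=
  match k as k return {measure set (projT2 (ptype E k)) -> \bar R} with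
  | 0 => m
  | S k => Measure.clone _ _ R (pmeas m k \x m)%E _
  end.

(* E^k and mu^k for k >= 1 *)
Definition powT d (E : measurableType d) (k : nat) : measurableType _ :=
  projT2 (ptype E k.-1).
Definition powM d (E : measurableType d) (R : realType)
  (m : {sigma_finite_measure set E -> \bar R}) (k : nat) :
  {measure set powT E k -> \bar R} := pmeas m k.-1.

Definition is_atom d (E : measurableType d) (R : realType)
  (mu : set E -> \bar R) (A : set E) : Prop :=
  [/\ measurable A, (0 < mu A)%E &
   forall B : set E, measurable B -> B `<=` A ->
     mu B = 0%E \/ mu (A `\` B) = 0%E].

Definition non_atomic d (E : measurableType d) (R : realType)
  (mu : set E -> \bar R) : Prop :=
  forall A : set E, ~ is_atom mu A.

(* Main.v *)
Require Import Defs.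
From HB Require Import structures.
From mathcomp Require Import all_boot all_order all_algebra.
From mathcomp Require Import all_classical all_reals all_analysis.
From mathcomp Require Import measurable_realfun.
From mathcomp Require Import ring lra.
Import Order.TTheory GRing.Theory Num.Theory.
Import numFieldNormedType.Exports.
Local Open Scope classical_set_scope.
Local Open Scope ring_scope.

Lemma prod_dom d1 d2 (T1: measurableType d1) (T2: measurableType d2) (R: realType)
  (m1 m1' : {measure set T1 -> \bar R}) (m2 m2' : {sigma_finite_measure set T2 -> \bar R})
  (c1 c2 : R) : 0 <= c1 -> 0 <= c2 ->
  (forall A, measurable A -> (m1 A <= c1%:E * m1' A)%E) ->
  (forall A, measurable A -> (m2 A <= c2%:E * m2' A)%E) ->
  forall C, measurable C -> ((m1 \x m2)%E C <= (c1*c2)%:E * (m1' \x m2')%E C)%E.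
Proof.
move=> c10 c20 h1 h2 C mC; rewrite /product_measure1 /=.
have mx2 := measurable_fun_xsection m2 mC.
have mx2' := measurable_fun_xsection m2' mC.
apply: (@le_trans _ _ (\int[m1]_x (c2%:E * m2' (xsection C x)))%E).
  apply: ge0_le_integral => //.
  - exact: measurable_funeM.
  - by move=> x _; apply: h2; exact: measurable_xsection.
apply: (@le_trans _ _ (\int[mscale (NngNum c10) m1']_x (c2%:E * m2' (xsection C x)))%E).
  apply: ge0_le_measure_integral => //.
  - by move=> x; rewrite mule_ge0.
  - exact: measurable_funeM.
rewrite ge0_integral_mscale //=; last 2 first.
  - exact: measurable_funeM.
  - by move=> x _; rewrite mule_ge0.
rewrite ge0_integralZl_EFin //= EFinM muleA //.
Qed.

Lemma pmeas_dom d (E : measurableType d) (R : realType)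
  (m1 m2 : {sigma_finite_measure set E -> \bar R}) (c : R) : 0 <= c ->
  (forall A, measurable A -> (m1 A <= c%:E * m2 A)%E) ->
  forall j (C : set (projT2 (ptype E j))), measurable C ->
  (pmeas m1 j C <= (c ^+ j.+1)%:E * pmeas m2 j C)%E.
Proof.
move=> c0 h; elim=> [|j IH] C mC; first by rewrite expr1; exact: h.
rewrite exprSr.
simpl; apply: prod_dom => //; exact: exprn_ge0.
Qed.

Lemma int_dom d (T : measurableType d) (R : realType)
  (m1 m2 : {measure set T -> \bar R}) (c : R) : 0 <= c ->
  (forall A, measurable A -> (m1 A <= c%:E * m2 A)%E) ->
  forall g : T -> \bar R, (forall x, 0 <= g x)%E -> measurable_fun [set: T] g ->
  (\int[m1]_x g x <= c%:E * \int[m2]_x g x)%E.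
Proof.
move=> c0 h g g0 mg.
rewrite -(@ge0_integral_mscale _ _ _ m2 setT measurableT (NngNum c0) g) //.
apply: ge0_le_measure_integral => //.
Qed.

Lemma mono_le_lim (R : realType) (x : nat -> \bar R) (L : \bar R) :
  (forall n, (0 < n)%N -> (x n <= x n.+1)%E) ->
  x n @[n --> \oo] --> L -> forall n, (0 < n)%N -> (x n <= L)%E.
Proof.
move=> hm hc n n0.
have step : forall m, (n <= m)%N -> (x n <= x m)%E.
  elim=> [|m IH]; first by rewrite leqn0 => /eqP ->.
  rewrite leq_eqVlt => /orP[/eqP <-//|].
  rewrite ltnS => nm; apply: (le_trans (IH nm)); apply: hm.
  exact: leq_trans n0 nm.
have -> : L = limn x by apply/esym/cvg_lim.
apply: lime_ge; first by apply/cvg_ex; exists L.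
near=> m; apply: step; near: m; exact: nbhs_infty_ge.
Unshelve. all: by end_near.
Qed.

Lemma dct_small d (T : measurableType d) (R : realType)
  (M : {measure set T -> \bar R}) (f : T -> R) :
  measurable_fun setT f -> M.-integrable setT (fun x => (f x ^+ 2)%:E) ->
  forall del : R, 0 < del -> exists2 h : R, 0 < h &
   (\int[M]_x (Num.min (f x ^+ 2) (h ^+ 2))%:E <= del%:E)%E.
Proof.
move=> mf hint del del0.
pose G (m : nat) x := Num.min (f x ^+ 2) (m.+1%:R^-1 ^+ 2).
have mG m : measurable_fun setT (fun x => (G m x)%:E).
  apply/measurable_EFinP; apply: measurable_minr.
    exact: measurable_funX.
  exact: measurable_cst.
have Gcvg : forall x, [set: T] x -> (fun m => (G m x)%:E) @ \oo --> (0:R)%:E.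
  move=> x _; apply: cvg_EFin; first exact: nearW.
  apply: (squeeze_cvgr (f := fun _ => 0) (h := fun m => harmonic m)).
  - near=> m; rewrite /= /G; apply/andP; split.
      by rewrite le_min sqr_ge0 sqr_ge0.
    rewrite ge_min; apply/orP; right.
    have h0 : 0 <= m.+1%:R^-1 :> R by rewrite invr_ge0.
    have h1 : m.+1%:R^-1 <= 1 :> R by rewrite invf_le1 // ler1n.
    rewrite expr2 /=; set y := m.+1%:R^-1 in h0 h1 *; nra.
  - exact: cvg_cst.
  - exact: cvg_harmonic.
have := @dominated_cvg _ _ _ M setT measurableT (fun m x => (G m x)%:E)
  (fun _ => 0%E) (fun x => (f x ^+ 2)%:E) mG Gcvg (fun _ _ => erefl) hint.
have absb : forall (n : nat) (x : T), [set: T] x -> (`|(G n x)%:E| <= (f x ^+ 2)%:E)%E.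
  move=> n x _; rewrite abse_EFin lee_fin ger0_norm.
    by rewrite ge_min lexx.
  by rewrite le_min sqr_ge0 sqr_ge0.
move=> /(_ absb); rewrite integral0 => /fine_cvgP[finI /cvgr0Pnorm_le /(_ del del0)] hn.
have [m [fm hm]] : exists m, (\int[M]_x (G m x)%:E)%E \is a fin_num /\
    `|fine (\int[M]_x (G m x)%:E)%E| <= del.
  have [N _ HN] := filterI finI hn.
  by exists N; have [] := HN N (leqnn N).
exists m.+1%:R^-1; first by rewrite invr_gt0.
rewrite -(fineK fm) lee_fin (le_trans _ hm) //.
exact: ler_norm.
Unshelve. all: by end_near.
Qed.

Lemma pw_ineq (R : realType) (t h y : R) : 0 < t -> 0 < h ->
  `|y| <= t / 2 * Num.min (y ^+ 2) (h ^+ 2) + (2 * t)^-1 + y ^+ 2 / h.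
Proof.
move=> t0 h0.
have y2 : y ^+ 2 = `|y| ^+ 2 by rewrite real_normK ?num_real.
rewrite y2; set b := `|y|; have b0 : 0 <= b by exact: normr_ge0.
have q0 : 0 <= b ^+ 2 / h by rewrite divr_ge0 ?sqr_ge0 // ltW.
have [bh|bh] := lerP b h.
  have -> : Num.min (b ^+ 2) (h ^+ 2) = b ^+ 2.
    have hle : b ^+ 2 <= h ^+ 2 by rewrite !expr2; nra.
    by rewrite minEle hle.
  suff : b <= t / 2 * b ^+ 2 + (2 * t)^-1 by lra.
  have -> : t / 2 * b ^+ 2 + (2 * t)^-1 = ((t * b - 1) ^+ 2 + 2 * t * b) / (2 * t).
    by field; lra.
  rewrite ler_pdivlMr; last by lra.
  have := sqr_ge0 (t * b - 1); lra.
have m0 : 0 <= t / 2 * Num.min (b ^+ 2) (h ^+ 2).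
  apply: mulr_ge0; first by lra.
  by rewrite le_min !sqr_ge0.
have i0 : 0 <= (2 * t)^-1 by rewrite invr_ge0; lra.
suff : b <= b ^+ 2 / h by lra.
rewrite ler_pdivlMr // expr2; apply: ler_pM => //; exact: ltW.
Qed.

Lemma pmeas_prob d (E : measurableType d) (R : realType) (Pr : probability E R) j :
  pmeas Pr j setT = 1%E.
Proof.
elim: j => [|j IH]; first exact: probability_setT.
rewrite /= -setXTT product_measure1E // IH mul1e; exact: probability_setT.
Qed.

Theorem lemma3 (d : measure_display) (E : measurableType d) (R : realType)
  (mu : {sigma_finite_measure set E -> \bar R})
  (a : nat -> R) (P : nat -> probability E R) (k : nat)
  (f : powT E k -> R) :
  non_atomic mu ->
  mu setT = +oo%E ->
  (forall n, (0 < n)%N -> 0 < a n) ->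
  a n @[n --> \oo] --> +oo ->
  a n / n%:R @[n --> \oo] --> 0 ->
  (forall n (B : set E), (0 < n)%N -> measurable B ->
     ((n%:R / a n)%:E * P n B <= (n.+1%:R / a n.+1)%:E * P n.+1 B)%E) ->
  (forall B : set E, measurable B ->
     ((n%:R / a n)%:E * P n B)%E @[n --> \oo] --> mu B) ->
  (0 < k)%N ->
  measurable_fun setT f ->
  (powM mu k).-integrable setT (fun x => (f x ^+ 2)%:E) ->
  (((n%:R / a n) `^ (k%:R / 2))%:E * \int[powM (P n) k]_x (f x)%:E)%E
    @[n --> \oo] --> 0%E.
Proof.
move=> _ _ ha _ hc hmono hlim k0 mf hint.
case: k f mf hint k0 => [|k] f mf hint _ //.
pose c n := a n / n%:R.
have cpos n : (0 < n)%N -> 0 < c n by move=> n0; rewrite divr_gt0 ?ha ?ltr0n.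
have Pdom n : (0 < n)%N -> forall B, measurable B -> (P n B <= (c n)%:E * mu B)%E.
  move=> n0 B mB.
  have H := @mono_le_lim R (fun m => ((m%:R / a m)%:E * P m B)%E) (mu B)
     (fun m m0 => hmono m B m0 mB) (hlim B mB) n n0.
  have an0 : a n != 0 by rewrite gt_eqF ?ha.
  have nn0 : n%:R != 0 :> R by rewrite pnatr_eq0 -lt0n.
  have -> : P n B = ((c n)%:E * ((n%:R / a n)%:E * P n B))%E.
    rewrite muleA -EFinM.
    have -> : c n * (n%:R / a n) = 1 by rewrite /c; field; apply/andP.
    by rewrite mul1e.
  apply: lee_pmul => //.
  - by rewrite lee_fin ltW ?cpos.
  - by rewrite mule_ge0 // lee_fin divr_ge0 // ltW ?ha.
have Qdom n : (0 < n)%N -> forall g : powT E k.+1 -> \bar R, (forall x, 0 <= g x)%E ->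
    measurable_fun setT g ->
    (\int[powM (P n) k.+1]_x g x <= ((c n) ^+ k.+1)%:E * \int[powM mu k.+1]_x g x)%E.
  move=> n0 g g0 mg; apply: int_dom => //.
  - exact/exprn_ge0/ltW/cpos.
  - move=> A mA; apply: pmeas_dom => //; first exact/ltW/cpos.
    exact: Pdom.
set M := powM mu k.+1.
have mf2 : measurable_fun setT (fun x => f x ^+ 2) by exact: measurable_funX.
have F0 x : (0 <= (f x ^+ 2)%:E)%E by rewrite lee_fin sqr_ge0.
have KKfin : (\int[M]_x (f x ^+ 2)%:E)%E \is a fin_num.
  rewrite ge0_fin_numE; last exact: integral_ge0.
  case/integrableP: hint => _; apply: le_lt_trans.
  by apply: ge0_le_integral => //; [exact/measurable_EFinP|
    apply: measurableT_comp => //; exact/measurable_EFinP|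
    move=> x _; rewrite gee0_abs].
set K := fine (\int[M]_x (f x ^+ 2)%:E)%E.
have K0 : 0 <= K by rewrite fine_ge0 // integral_ge0.
pose Gh h x := Num.min (f x ^+ 2) (h ^+ 2).
have mGh h : measurable_fun setT (Gh h).
  apply: measurable_minr => //; exact: measurable_cst.
have Gh0 h x : 0 <= Gh h x by rewrite le_min !sqr_ge0.
have Ghfin h : (\int[M]_x (Gh h x)%:E)%E \is a fin_num.
  rewrite ge0_fin_numE; last by apply: integral_ge0 => x _; rewrite lee_fin.
  have := KKfin; rewrite fin_numElt; move=> /andP[_]; apply: le_lt_trans.
  apply: ge0_le_integral => //; first by move=> x _; rewrite lee_fin.
  - exact/measurable_EFinP.
  - exact/measurable_EFinP.
  - by move=> x _; rewrite lee_fin ge_min lexx.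
pose e h := fine (\int[M]_x (Gh h x)%:E)%E.
have bnd n t h : (0 < n)%N -> 0 < t -> 0 < h ->
  (\int[powM (P n) k.+1]_x `|f x|%:E <=
   ((c n) ^+ k.+1 * (t / 2 * e h + h^-1 * K) + (2 * t)^-1)%:E)%E.
  move=> n0 t0 h0.
  have t20 : 0 <= t / 2 by rewrite divr_ge0 // ltW.
  have it0 : 0 <= (2 * t)^-1 by rewrite invr_ge0 mulr_ge0 // ltW.
  have ih0 : 0 <= h^-1 by rewrite invr_ge0 ltW.
  have mA : measurable_fun setT (fun x => t / 2 * Gh h x + h^-1 * f x ^+ 2).
    apply: measurable_funD; apply: measurable_funM => //; exact: measurable_cst.
  have A0 x : 0 <= t / 2 * Gh h x + h^-1 * f x ^+ 2.
    by rewrite addr_ge0 // mulr_ge0 // sqr_ge0.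
  apply: (@le_trans _ _ (\int[powM (P n) k.+1]_x
     ((t / 2 * Gh h x + h^-1 * f x ^+ 2)%:E + ((2 * t)^-1)%:E))%E).
    apply: ge0_le_integral => //.
    - by apply/measurable_EFinP; apply: measurableT_comp => //; exact: normr_measurable.
    - apply: emeasurable_funD; first exact/measurable_EFinP.
      exact: measurable_cst.
    - move=> x _; rewrite -EFinD lee_fin.
      have := @pw_ineq R t h (f x) t0 h0.
      by rewrite /Gh; lra.
  rewrite ge0_integralD //; last 2 first.
    by move=> x _; rewrite lee_fin.
    exact/measurable_EFinP.
  rewrite (integral_cst _ measurableT).
  have -> : powM (P n) k.+1 setT = 1%E by exact: pmeas_prob.
  rewrite mule1 EFinD.
  apply: leeD => //.
  apply: (le_trans (Qdom n n0 _ _ _)).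
  - by move=> x; rewrite lee_fin.
  - exact/measurable_EFinP.
  rewrite EFinM; apply: lee_pmul => //.
  - by rewrite lee_fin exprn_ge0 // ltW ?cpos.
  - by apply: integral_ge0 => x _; rewrite lee_fin.
  under eq_integral do rewrite EFinD.
  rewrite ge0_integralD //; last 4 first.
  - by move=> x _; rewrite lee_fin mulr_ge0.
  - by apply/measurable_EFinP; apply: measurable_funM => //; exact: measurable_cst.
  - by move=> x _; rewrite lee_fin mulr_ge0 // sqr_ge0.
  - by apply/measurable_EFinP; apply: measurable_funM => //; exact: measurable_cst.
  under eq_integral do rewrite EFinM.
  rewrite ge0_integralZl_EFin //; last 2 first.
  - by move=> x _; rewrite lee_fin.
  - exact/measurable_EFinP.
  have -> : (\int[M]_x (h^-1 * f x ^+ 2)%:E = (h^-1)%:E * \int[M]_x (f x ^+ 2)%:E)%E.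
    under eq_integral do rewrite EFinM.
    by rewrite ge0_integralZl_EFin //; exact/measurable_EFinP.
  by rewrite /e /K EFinD !EFinM !fineK.
have uprop n : (0 < n)%N -> 0 < (n%:R / a n) `^ (k.+1%:R / 2) /\
    ((n%:R / a n) `^ (k.+1%:R / 2)) ^+ 2 * c n ^+ k.+1 = 1.
  move=> n0; have x0 : 0 < n%:R / a n by rewrite divr_gt0 ?ha ?ltr0n.
  split; first exact: powR_gt0.
  rewrite -powR_mulrn ?powR_ge0 // -powRrM.
  have -> : k.+1%:R / 2 * 2%:R = k.+1%:R :> R by field.
  rewrite powR_mulrn ?ltW // /c -exprMn.
  have an0 : a n != 0 by rewrite gt_eqF ?ha.
  have nn0 : n%:R != 0 :> R by rewrite pnatr_eq0 -lt0n.
  have -> : n%:R / a n * (a n / n%:R) = 1 by field; apply/andP.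
  by rewrite expr1n.
have Ifin n : (0 < n)%N ->
    ((\int[powM (P n) k.+1]_x (f x)%:E)%E \is a fin_num) /\
    (`|\int[powM (P n) k.+1]_x (f x)%:E| <= \int[powM (P n) k.+1]_x `|f x|%:E)%E.
  move=> n0.
  have IJ : (`|\int[powM (P n) k.+1]_x (f x)%:E| <= \int[powM (P n) k.+1]_x `|f x|%:E)%E.
    apply: le_abse_integral => //; exact/measurable_EFinP.
  split => //; rewrite fin_num_abs; apply: (le_lt_trans IJ).
  by apply: (le_lt_trans (bnd n 1 1 n0 ltr01 ltr01)); exact: ltry.
apply/fine_cvgP; split.
  near=> n; have n0 : (0 < n)%N by near: n; exact: (nbhs_infty_gt 0).
  by rewrite fin_numM //; exact: (Ifin n n0).1.
apply/cvgr0Pnorm_le => eps eps0.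
set del := eps / 4; have del0 : 0 < del by rewrite divr_gt0.
have [h h0 hh] := dct_small _ _ _ M f mf hint (del ^+ 2) (exprn_gt0 _ del0).
have eh : e h <= del ^+ 2 by rewrite -lee_fin /e fineK.
have eh0 : 0 <= e h by rewrite /e fine_ge0 // integral_ge0 // => x _; rewrite lee_fin.
set L := K / (h * del).
have L0 : 0 <= L by rewrite divr_ge0 // mulr_ge0 // ltW.
have L1 : 0 < (L + 1) ^+ 2 by rewrite exprn_gt0 // ltr_wpDl.
move/cvgr0Pnorm_le : hc => /(_ (((L + 1) ^+ 2)^-1)) hc.
have hc' := hc (ltac:(by rewrite invr_gt0)); clear hc.
near=> n.
have n0 : (0 < n)%N by near: n; exact: (nbhs_infty_gt 0).
have cn : `|c n| <= ((L + 1) ^+ 2)^-1 by near: n; exact: hc'.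
have [u0 uc] := uprop n n0.
set u := (n%:R / a n) `^ (k.+1%:R / 2) in u0 uc *.
have [If IJ] := Ifin n n0.
rewrite /= fineM // normrM ger0_norm ?ltW //=.
have ud0 : 0 < u / del by rewrite divr_gt0.
have Iu := le_trans IJ (bnd n (u / del) h n0 ud0 h0).
rewrite -(fineK If) abse_EFin lee_fin in Iu.
rewrite -/u.
apply: (le_lt_trans (ler_wpM2l (ltW u0) Iu)).
have u2 : u ^+ 2 != 0 by rewrite expf_neq0 // gt_eqF.
have CE : c n ^+ k.+1 = (u ^+ 2)^-1.
  by apply: (mulfI u2); rewrite uc mulfV.
rewrite CE.
have hn0 : h != 0 by rewrite gt_eqF.
have dn0 : del != 0 by rewrite gt_eqF.
have un0 : u != 0 by rewrite gt_eqF.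
have -> : u * ((u ^+ 2)^-1 * (u / del / 2 * e h + h^-1 * K) + (2 * (u / del))^-1)
    = e h / (2 * del) + K / (h * u) + del / 2.
  by field; rewrite hn0 dn0 un0.
have cpos' := cpos n n0.
have c1 : c n <= ((L + 1) ^+ 2)^-1 by rewrite -[c n]ger0_norm // ltW.
have Cc : c n ^+ k.+1 <= c n.
  have cle1 : c n <= 1.
    apply: (le_trans c1); rewrite invf_le1 //.
    have : 1 <= L + 1 by lra.
    move=> H; rewrite expr2; nra.
  have ck : c n ^+ k <= 1 by apply: exprn_ile1 => //; exact: ltW.
  by rewrite exprS -[X in _ <= X]mulr1 ler_pM2l.
have uL : L + 1 <= u.
  have : (L + 1) ^+ 2 <= u ^+ 2.
    rewrite -lef_pV2 ?posrE ?exprn_gt0 //.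
    by rewrite -CE (le_trans Cc c1).
    by lra.
  rewrite !expr2 => H; nra.
have t1 : e h / (2 * del) <= del / 2.
  have -> : del / 2 = del ^+ 2 / (2 * del) by field.
  by rewrite ler_pM2r // invr_gt0 mulr_gt0.
have t2 : K / (h * u) <= del.
  rewrite ler_pdivrMr ?mulr_gt0 //.
  have Lu : K / (h * del) <= u by rewrite -/L; lra.
  rewrite ler_pdivrMr ?mulr_gt0 // in Lu.
  nra.
have : del / 2 + del + del / 2 < eps by rewrite /del; lra.
lra.
Unshelve. all: by end_near.
Qed.
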